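(* Let $a_1,a_2,\gamma_1,\zeta\in\mathbb R$ with $a_1,a_2\neq0$, $|a_1|\neq|a_2|$, and consider the equation $\mathcal Q_+=0$ with coefficients $\alpha_1=\beta_1=\dfrac{(a_1+a_2)\gamma_1}{2a_1}$, $\alpha_2=\beta_2=0$, $\gamma_2=\dfrac{a_2\gamma_1}{a_1}$, $\xi_1=\xi_2=\dfrac{3(a_1+a_2)\gamma_1^2}{8a_1^2}$, $\xi_3=\xi_4=\dfrac{(a_1-a_2)\gamma_1^2}{8a_1^2}$. This equation can be linearized by a real Möbius transformation $u_{n,m}=\dfrac{\alpha v_{n,m}+\beta}{\gamma v_{n,m}+\delta}$ (applied simultaneously at all lattice points, $\alpha\delta-\beta\gamma\neq0$) into the linear equation $$v_{n,m}+v_{n+1,m+1}+\frac{a_2}{a_1}\big(v_{n+1,m}+v_{n,m+1}\big)=0$$ if and only if $\zeta=\dfrac{(a_1+a_2)\gamma_1^3}{4a_1^3}$. In that case a linearizing transformation is given by $\beta=0$, $\gamma=-\dfrac{\alpha\gamma_1}{2a_1}$ (with $\alpha,\delta\neq0$ arbitrary).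
   Context: Let $u:\mathbb Z^2\to\mathbb R$. The equation $\mathcal Q_+=0$ is $a_1(u_{n,m}+u_{n+1,m+1})+a_2(u_{n+1,m}+u_{n,m+1})+(\alpha_1-\alpha_2)u_{n,m}u_{n+1,m}+(\alpha_1+\alpha_2)u_{n,m+1}u_{n+1,m+1}+(\beta_1-\beta_2)u_{n,m}u_{n,m+1}+(\beta_1+\beta_2)u_{n+1,m}u_{n+1,m+1}+\gamma_1u_{n,m}u_{n+1,m+1}+\gamma_2u_{n+1,m}u_{n,m+1}+(\xi_1-\xi_3)u_{n,m}u_{n+1,m}u_{n,m+1}+(\xi_1+\xi_3)u_{n,m}u_{n+1,m}u_{n+1,m+1}+(\xi_2-\xi_4)u_{n+1,m}u_{n,m+1}u_{n+1,m+1}+(\xi_2+\xi_4)u_{n,m}u_{n,m+1}u_{n+1,m+1}+\zeta u_{n,m}u_{n+1,m}u_{n,m+1}u_{n+1,m+1}=0$. ''Linearized by the Möbius transformation into the linear equation'' means: substituting $u_{k,l}=(\alpha v_{k,l}+\beta)/(\gamma v_{k,l}+\delta)$ for the four lattice values and multiplying by the product of the four denominators yields a nonzero constant multiple of the stated linear equation in $v$. *)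

(* Defs.v *)
From Stdlib Require Import Reals.
Open Scope R_scope.

(* Lattice values of one elementary quad:
   x1 = u_{n,m}, x2 = u_{n+1,m}, x3 = u_{n,m+1}, x4 = u_{n+1,m+1}. *)

Definition Qplus (a1 a2 al1 al2 be1 be2 g1 g2 xi1 xi2 xi3 xi4 ze : R)
  (x1 x2 x3 x4 : R) : R :=
  a1*(x1+x4) + a2*(x2+x3)
  + (al1-al2)*x1*x2 + (al1+al2)*x3*x4
  + (be1-be2)*x1*x3 + (be1+be2)*x2*x4
  + g1*x1*x4 + g2*x2*x3
  + (xi1-xi3)*x1*x2*x3 + (xi1+xi3)*x1*x2*x4
  + (xi2-xi4)*x2*x3*x4 + (xi2+xi4)*x1*x3*x4
  + ze*x1*x2*x3*x4.

(* Q_+ evaluated at u_k = p_k / q_k and multiplied by q1 q2 q3 q4, written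
   as a polynomial (no division): each monomial prod_{k in S} u_k becomes
   prod_{k in S} p_k * prod_{k notin S} q_k. *)
Definition QplusCleared (a1 a2 al1 al2 be1 be2 g1 g2 xi1 xi2 xi3 xi4 ze : R)
  (p1 p2 p3 p4 q1 q2 q3 q4 : R) : R :=
  let m (b1 b2 b3 b4 : bool) :=
    (if b1 then p1 else q1) * (if b2 then p2 else q2) *
    (if b3 then p3 else q3) * (if b4 then p4 else q4) in
  a1*(m true false false false + m false false false true)
  + a2*(m false true false false + m false false true false)
  + (al1-al2)*m true true false false + (al1+al2)*m false false true true
  + (be1-be2)*m true false true false + (be1+be2)*m false true false true
  + g1*m true false false true + g2*m false true true false
  + (xi1-xi3)*m true true true false + (xi1+xi3)*m true true false true
  + (xi2-xi4)*m false true true true + (xi2+xi4)*m true false true true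
  + ze*m true true true true.

(* The Moebius substitution u_k = (al v_k + be)/(ga v_k + de), cleared of
   denominators, is a nonzero constant multiple of the linear form L. *)
Definition linearizes_by (Qc : R -> R -> R -> R -> R -> R -> R -> R -> R)
  (L : R -> R -> R -> R -> R) (al be ga de : R) : Prop :=
  exists K : R, K <> 0 /\
    forall v1 v2 v3 v4 : R,
      Qc (al*v1+be) (al*v2+be) (al*v3+be) (al*v4+be)
         (ga*v1+de) (ga*v2+de) (ga*v3+de) (ga*v4+de)
      = K * L v1 v2 v3 v4.

Definition linearizable (Qc : R -> R -> R -> R -> R -> R -> R -> R -> R)
  (L : R -> R -> R -> R -> R) : Prop :=
  exists al be ga de : R, al*de - be*ga <> 0 /\ linearizes_by Qc L al be ga de.

Definition Llin (a1 a2 : R) (v1 v2 v3 v4 : R) : R :=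
  v1 + v4 + (a2/a1)*(v2 + v3).

(* Main.v *)
Require Import Defs.
From Stdlib Require Import Reals Lra.
Open Scope R_scope.
Definition Lh (a1 a2 v1 w1 v2 w2 v3 w3 v4 w4 : R) : R :=
  v1*w2*w3*w4 + w1*w2*w3*v4 + (a2/a1)*(w1*v2*w3*w4 + w1*w2*v3*w4).

Section S.
Variables c1 c2 c3 c4 c5 c6 c7 c8 c9 c10 c11 c12 c13 K al be ga de a1 a2 : R.
Definition EE v1 w1 v2 w2 v3 w3 v4 w4 :=
  QplusCleared c1 c2 c3 c4 c5 c6 c7 c8 c9 c10 c11 c12 c13
   (al*v1+be*w1) (al*v2+be*w2) (al*v3+be*w3) (al*v4+be*w4)
   (ga*v1+de*w1) (ga*v2+de*w2) (ga*v3+de*w3) (ga*v4+de*w4)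
  - K * Lh a1 a2 v1 w1 v2 w2 v3 w3 v4 w4.

Lemma sl1 v1 w1 v2 w2 v3 w3 v4 w4 : EE v1 w1 v2 w2 v3 w3 v4 w4 =
  v1 * EE 1 1 v2 w2 v3 w3 v4 w4 + (w1 - v1) * EE 0 1 v2 w2 v3 w3 v4 w4.
Proof. unfold EE, QplusCleared, Lh; simpl; ring. Qed.
Lemma sl2 v1 w1 v2 w2 v3 w3 v4 w4 : EE v1 w1 v2 w2 v3 w3 v4 w4 =
  v2 * EE v1 w1 1 1 v3 w3 v4 w4 + (w2 - v2) * EE v1 w1 0 1 v3 w3 v4 w4.
Proof. unfold EE, QplusCleared, Lh; simpl; ring. Qed.
Lemma sl3 v1 w1 v2 w2 v3 w3 v4 w4 : EE v1 w1 v2 w2 v3 w3 v4 w4 =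
  v3 * EE v1 w1 v2 w2 1 1 v4 w4 + (w3 - v3) * EE v1 w1 v2 w2 0 1 v4 w4.
Proof. unfold EE, QplusCleared, Lh; simpl; ring. Qed.
Lemma sl4 v1 w1 v2 w2 v3 w3 v4 w4 : EE v1 w1 v2 w2 v3 w3 v4 w4 =
  v4 * EE v1 w1 v2 w2 v3 w3 1 1 + (w4 - v4) * EE v1 w1 v2 w2 v3 w3 0 1.
Proof. unfold EE, QplusCleared, Lh; simpl; ring. Qed.

Lemma extend :
  (forall v1 v2 v3 v4,
     QplusCleared c1 c2 c3 c4 c5 c6 c7 c8 c9 c10 c11 c12 c13
       (al*v1+be) (al*v2+be) (al*v3+be) (al*v4+be)
       (ga*v1+de) (ga*v2+de) (ga*v3+de) (ga*v4+de) = K * Llin a1 a2 v1 v2 v3 v4) ->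
  forall v1 w1 v2 w2 v3 w3 v4 w4, EE v1 w1 v2 w2 v3 w3 v4 w4 = 0.
Proof.
  intros H.
  assert (H1 : forall v1 v2 v3 v4, EE v1 1 v2 1 v3 1 v4 1 = 0).
  { intros. unfold EE. rewrite !Rmult_1_r. rewrite H. unfold Lh, Llin. ring. }
  assert (H2 : forall v1 v2 v3 v4 w4, EE v1 1 v2 1 v3 1 v4 w4 = 0).
  { intros. rewrite sl4, !H1. ring. }
  assert (H3 : forall v1 v2 v3 w3 v4 w4, EE v1 1 v2 1 v3 w3 v4 w4 = 0).
  { intros. rewrite sl3, !H2. ring. }
  assert (H4 : forall v1 v2 w2 v3 w3 v4 w4, EE v1 1 v2 w2 v3 w3 v4 w4 = 0).
  { intros. rewrite sl2, !H3. ring. }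
  intros. rewrite sl1, !H4. ring.
Qed.
End S.
Lemma part2 (a1 a2 g1 al de : R) (ha1 : a1 <> 0) (hal: al<>0) (hde: de<>0) :
  linearizes_by (QplusCleared a1 a2 ((a1+a2)*g1/(2*a1)) 0 ((a1+a2)*g1/(2*a1)) 0 g1 (a2*g1/a1)
   (3*(a1+a2)*g1^2/(8*a1^2)) (3*(a1+a2)*g1^2/(8*a1^2)) ((a1-a2)*g1^2/(8*a1^2)) ((a1-a2)*g1^2/(8*a1^2))
   ((a1+a2)*g1^3/(4*a1^3))) (Llin a1 a2) al 0 (-(al*g1)/(2*a1)) de.
Proof.
  exists (a1*al*de^3). split.
  - apply Rmult_integral_contrapositive_currified; [apply Rmult_integral_contrapositive_currified|]; auto. apply pow_nonzero; auto.
  - intros. unfold QplusCleared, Llin; simpl. field. auto.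
Qed.

Theorem mainTheorem5 (a1 a2 g1 ze : R)
  (ha1 : a1 <> 0) (ha2 : a2 <> 0) (hne : Rabs a1 <> Rabs a2) :
  let al1 := (a1+a2)*g1/(2*a1) in
  let be1 := (a1+a2)*g1/(2*a1) in
  let al2 := 0 in
  let be2 := 0 in
  let g2 := a2*g1/a1 in
  let xi1 := 3*(a1+a2)*g1^2/(8*a1^2) in
  let xi2 := 3*(a1+a2)*g1^2/(8*a1^2) in
  let xi3 := (a1-a2)*g1^2/(8*a1^2) in
  let xi4 := (a1-a2)*g1^2/(8*a1^2) in
  let Qc := QplusCleared a1 a2 al1 al2 be1 be2 g1 g2 xi1 xi2 xi3 xi4 ze in
  (linearizable Qc (Llin a1 a2) <-> ze = (a1+a2)*g1^3/(4*a1^3)) /\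
  (ze = (a1+a2)*g1^3/(4*a1^3) ->
     forall al de : R, al <> 0 -> de <> 0 ->
       linearizes_by Qc (Llin a1 a2) al 0 (-(al*g1)/(2*a1)) de).
Proof.
  cbv zeta.
  assert (hs : a1 + a2 <> 0).
  { intro h; apply hne. replace a2 with (-a1) by lra. rewrite Rabs_Ropp; reflexivity. }
  split; [split|].
  - intros [al [be [ga [de [hD [K [hK H]]]]]]].
    pose proof (extend _ _ _ _ _ _ _ _ _ _ _ _ _ _ _ _ _ _ _ _ H) as E.
    assert (h0 : K*(be*al)*(al^2*(2*(a1+a2))) = a1 * EE a1 a2 ((a1+a2)*g1/(2*a1)) 0 ((a1+a2)*g1/(2*a1)) 0 g1 (a2*g1/a1)
   (3*(a1+a2)*g1^2/(8*a1^2)) (3*(a1+a2)*g1^2/(8*a1^2)) ((a1-a2)*g1^2/(8*a1^2)) ((a1-a2)*g1^2/(8*a1^2))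
   ze K al be ga de a1 a2 (-be) al (-be) al (-be) al (-be) al).
    { unfold EE, QplusCleared, Lh; simpl. field. auto. }
    rewrite E, Rmult_0_r in h0.
    destruct (Req_dec al 0) as [al0|alnz].
    + exfalso.
      assert (h1 : a1*(be*ga)^4 = EE a1 a2 ((a1+a2)*g1/(2*a1)) 0 ((a1+a2)*g1/(2*a1)) 0 g1 (a2*g1/a1)
   (3*(a1+a2)*g1^2/(8*a1^2)) (3*(a1+a2)*g1^2/(8*a1^2)) ((a1-a2)*g1^2/(8*a1^2)) ((a1-a2)*g1^2/(8*a1^2))
   ze K al be ga de a1 a2 de (-ga) (-be) al (-be) al (-be) al).
      { subst al. unfold EE, QplusCleared, Lh; simpl. field. auto. }
      rewrite E in h1.
      assert (bg : be*ga <> 0) by (intro h; apply hD; rewrite al0, h; ring).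
      apply Rmult_integral in h1. destruct h1 as [h1|h1]; [auto|].
      apply (pow_nonzero _ 4) in bg. auto.
    + assert (be0 : be = 0).
      { apply Rmult_integral in h0. destruct h0 as [h0|h0].
        - apply Rmult_integral in h0. destruct h0 as [h0|h0]; [contradiction|].
          apply Rmult_integral in h0. destruct h0; [auto|contradiction].
        - exfalso. apply Rmult_integral in h0. destruct h0 as [h0|h0].
          + apply (pow_nonzero al 2) in alnz. auto.
          + apply hs. lra. }
      subst be.
      assert (denz : de <> 0) by (intro h; apply hD; rewrite h; ring).
      assert (h1 : (a1*al*de^3 - K)*(de*al^3) = EE a1 a2 ((a1+a2)*g1/(2*a1)) 0 ((a1+a2)*g1/(2*a1)) 0 g1 (a2*g1/a1)
   (3*(a1+a2)*g1^2/(8*a1^2)) (3*(a1+a2)*g1^2/(8*a1^2)) ((a1-a2)*g1^2/(8*a1^2)) ((a1-a2)*g1^2/(8*a1^2))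
   ze K al 0 ga de a1 a2 de (-ga) 0 al 0 al 0 al).
      { unfold EE, QplusCleared, Lh; simpl. field. auto. }
      rewrite E in h1. apply Rmult_integral in h1. destruct h1 as [h1|h1].
      2:{ exfalso. apply Rmult_integral in h1. destruct h1; [auto|].
          apply (pow_nonzero al 3) in alnz. auto. }
      assert (Ke : K = a1*al*de^3) by lra. subst K.
      assert (h2 : (ga + g1*al/(2*a1))*((a1+a2)*al^3*de^4) = EE a1 a2 ((a1+a2)*g1/(2*a1)) 0 ((a1+a2)*g1/(2*a1)) 0 g1 (a2*g1/a1)
   (3*(a1+a2)*g1^2/(8*a1^2)) (3*(a1+a2)*g1^2/(8*a1^2)) ((a1-a2)*g1^2/(8*a1^2)) ((a1-a2)*g1^2/(8*a1^2))
   ze (a1*al*de^3) al 0 ga de a1 a2 de (-ga) de (-ga) 0 al 0 al).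
      { unfold EE, QplusCleared, Lh; simpl. field. auto. }
      rewrite E in h2. apply Rmult_integral in h2. destruct h2 as [h2|h2].
      2:{ exfalso. apply Rmult_integral in h2. destruct h2 as [h2|h2].
          - apply Rmult_integral in h2. destruct h2; [auto|]. apply (pow_nonzero al 3) in alnz. auto.
          - apply (pow_nonzero de 4) in denz. auto. }
      assert (gae : ga = - (g1*al/(2*a1))) by lra. subst ga.
      assert (h4 : (ze - (a1+a2)*g1^3/(4*a1^3))*(al^4*de^4) = EE a1 a2 ((a1+a2)*g1/(2*a1)) 0 ((a1+a2)*g1/(2*a1)) 0 g1 (a2*g1/a1)
   (3*(a1+a2)*g1^2/(8*a1^2)) (3*(a1+a2)*g1^2/(8*a1^2)) ((a1-a2)*g1^2/(8*a1^2)) ((a1-a2)*g1^2/(8*a1^2))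
   ze (a1*al*de^3) al 0 (- (g1*al/(2*a1))) de a1 a2 de (g1*al/(2*a1)) de (g1*al/(2*a1)) de (g1*al/(2*a1)) de (g1*al/(2*a1))).
      { unfold EE, QplusCleared, Lh; simpl. field. auto. }
      rewrite E in h4. apply Rmult_integral in h4. destruct h4 as [h4|h4]; [lra|].
      exfalso. apply Rmult_integral in h4. destruct h4 as [h4|h4].
      * apply (pow_nonzero al 4) in alnz. auto.
      * apply (pow_nonzero de 4) in denz. auto.
  - intros hz. exists 1, 0, (-(1*g1)/(2*a1)), 1. split; [lra|].
    rewrite hz. apply part2; auto; lra.
  - intros hz al de hal hde. rewrite hz. apply part2; auto.
Qed.
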